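(* Let $G=(V,E)$ be an almost tree (2). Then the diameter of the 1-skeleton of $\mathrm{CUT}(G)$ satisfies $$\left\lfloor \frac{|V|}{3}\right\rfloor \le d(\mathrm{CUT}(G)) \le |V|-1.$$
   Context: For an undirected graph $G=(V,E)$ and $S\subseteq V$, $\delta(S)\subseteq E$ denotes the set of edges with exactly one endpoint in $S$, and $\mathbf v(S)\in\{0,1\}^{E}$ is its incidence vector ($v(S)_e=1$ iff $e\in\delta(S)$). The cut polytope is $\mathrm{CUT}(G)=\operatorname{conv}\{\mathbf v(S):S\subseteq V\}\subset\mathbb R^{E}$. The 1-skeleton of a polytope is the graph whose vertices are the polytope's vertices and whose edges are its one-dimensional faces; $d(\cdot)$ denotes its diameter. A connected graph is an almost tree ($k$) if every biconnected component (maximal subgraph that remains connected after removal of any single vertex) has at most $k$ edges not belonging to a spanning tree of that component. *)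

(* Defs.v *)
From HB Require Import structures.
From mathcomp Require Import all_boot all_order all_algebra.
From mathcomp Require Import reals.
Set Implicit Arguments. Unset Strict Implicit. Unset Printing Implicit Defensive.
Import Order.TTheory GRing.Theory Num.Theory.
Local Open Scope ring_scope.

Section Graphs.
Variable T : finType.
Variable e : rel T.

Definition simple_graph : Prop := symmetric e /\ irreflexive e.

Definition edges : {set {set T}} := [set [set x; y] | x in T, y in T & e x y].

(* Connectivity of the subgraph induced on A (the empty graph counts as connected). *)
Definition induced_rel (A : {set T}) : rel T := [rel x y | [&& e x y, x \in A & y \in A]].
Definition connected_on (A : {set T}) : bool :=
  [forall x in A, forall y in A, connect (induced_rel A) x y].
Definition connected_graph : bool := connected_on setT.

Definition biconnected_on (B : {set T}) : bool :=
  connected_on B && [forall v in B, connected_on (B :\ v)].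

Definition biconnected_component (B : {set T}) : bool :=
  biconnected_on B && [forall B' : {set T}, (B \proper B') ==> ~~ biconnected_on B'].

Definition edges_in (B : {set T}) : {set {set T}} := [set f in edges | f \subset B].

(* Number of edges of the (connected) component B outside a spanning tree of it:
   |E(B)| - (|B| - 1). *)
Definition almost_tree (k : nat) : bool :=
  connected_graph &&
  [forall B : {set T}, biconnected_component B ==> (#|edges_in B| <= k + (#|B| - 1))%N].

Definition delta (S : {set T}) : {set {set T}} := [set f in edges | #|f :&: S| == 1%N].

(* Vertices of CUT(G) are the incidence vectors v(S); we identify v(S) with the edge set delta(S). *)
Definition is_cut (D : {set {set T}}) : Prop := exists S : {set T}, D = delta S.

(* Linear functional c : R^E applied to the incidence vector of D. *)
Definition dotc (R : realType) (c : {set T} -> R) (D : {set {set T}}) : R :=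
  \sum_(f in D) c f.

(* Two distinct vertices of CUT(G) are adjacent in the 1-skeleton iff some linear
   functional is maximized over the vertices of CUT(G) exactly at these two vertices,
   i.e. the face it exposes is the segment conv{v(D1), v(D2)} (a 1-dimensional face). *)
Definition cut_adj (R : realType) (D1 D2 : {set {set T}}) : Prop :=
  [/\ is_cut D1, is_cut D2, D1 <> D2 &
   exists c : {set T} -> R,
     dotc c D1 = dotc c D2 /\
     forall S : {set T}, dotc c (delta S) <= dotc c D1 /\
       (dotc c (delta S) = dotc c D1 -> delta S = D1 \/ delta S = D2)].

Definition skel_walk (R : realType) (k : nat) (D1 D2 : {set {set T}}) : Prop :=
  exists p : seq {set {set T}},
    [/\ size p = k, last D1 p = D2 &
        forall i, (i < k)%N -> cut_adj R (nth D1 (D1 :: p) i) (nth D1 (D1 :: p) i.+1)].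

Definition is_skel_diameter (R : realType) (d : nat) : Prop :=
  (forall D1 D2, is_cut D1 -> is_cut D2 -> exists2 k, (k <= d)%N & skel_walk R k D1 D2) /\
  (exists D1 D2, [/\ is_cut D1, is_cut D2 & forall k, (k < d)%N -> ~ skel_walk R k D1 D2]).

End Graphs.

(* Main.v *)
Require Import Defs.
From HB Require Import structures.
From mathcomp Require Import all_boot all_order all_algebra.
From mathcomp Require Import reals.
From Stdlib Require Import Classical.
From mathcomp Require Import zify.
From mathcomp Require Import lra.
Set Implicit Arguments. Unset Strict Implicit. Unset Printing Implicit Defensive.
Import Order.TTheory GRing.Theory Num.Theory.

Section SD.
Variable T : finType.
Definition sd (A B : {set T}) : {set T} := [set x | (x \in A) (+) (x \in B)].
Lemma in_sd A B x : (x \in sd A B) = (x \in A) (+) (x \in B).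
Proof. by rewrite inE. Qed.
Lemma sdC A B : sd A B = sd B A.
Proof. by apply/setP => x; rewrite !in_sd addbC. Qed.
Lemma sdA A B C : sd A (sd B C) = sd (sd A B) C.
Proof. by apply/setP => x; rewrite !in_sd addbA. Qed.
Lemma sdvv A : sd A A = set0.
Proof. by apply/setP => x; rewrite in_sd inE addbb. Qed.
Lemma sd0 A : sd A set0 = A.
Proof. by apply/setP => x; rewrite in_sd inE addbF. Qed.
Lemma sdK A B : sd A (sd A B) = B.
Proof. by apply/setP => x; rewrite !in_sd addKb. Qed.
Lemma card_sd_tri A B C : (#|sd A C| <= #|sd A B| + #|sd B C|)%N.
Proof.
apply: leq_trans (leq_card_setU _ _) ; apply: subset_leq_card.
apply/subsetP => x; rewrite !inE.
by case: (x \in A); case: (x \in B); case: (x \in C).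
Qed.
End SD.

Section Conn.
Variable T : finType.

Lemma conn_pres (U : Type) (rr : rel T) (f : T -> U) :
  (forall x y, rr x y -> f x = f y) -> forall x y, connect rr x y -> f x = f y.
Proof.
move=> H x y /connectP [p pp ->]; elim: p x pp => [|z p IH] x //=.
by case/andP => rxz pz; rewrite (H _ _ rxz) (IH z pz).
Qed.

Lemma conn_mono (r1 r2 : rel T) : subrel r1 r2 ->
  forall x y, connect r1 x y -> connect r2 x y.
Proof. by move=> H x y; apply: connect_sub => u v /H; exact: connect1. Qed.

Lemma exit_lemma (rr : rel T) (P : pred T) u w :
  connect rr u w -> P u -> ~~ P w ->
  exists a b, [/\ connect [rel x y | rr x y && P x && P y] u a, P a, ~~ P b & rr a b].
Proof.
move=> /connectP [p pp ->]; elim: p u pp => [|z p IH] u /=.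
  by move=> _ ->.
case/andP => ruz pz Pu nPl.
case Pz: (P z).
  have [a [b [c1 Pa nPb rab]]] := IH z pz Pz nPl.
  exists a, b; split => //; apply: connect_trans c1.
  by apply: connect1; rewrite /= ruz Pu Pz.
by exists u, z; split => //; rewrite Pz.
Qed.

Lemma reach_restrict (rr : rel T) r z : connect rr r z ->
  connect [rel x y | rr x y && connect rr r x && connect rr r y] r z.
Proof.
have aux : forall p s, connect rr r s -> path rr s p ->
  connect [rel x y | rr x y && connect rr r x && connect rr r y] s (last s p).
  elim=> [|w p IH] s crs //=.
  case/andP => rsw pw.
  have crw : connect rr r w by apply: connect_trans crs (connect1 rsw).
  apply: connect_trans (IH w crw pw).
  by apply: connect1; rewrite /= rsw crs crw.
move=> /connectP [p pp ->]; exact: aux.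
Qed.
End Conn.

Section Graph.
Variable T : finType.
Variable e : rel T.
Hypothesis esym : symmetric e.
Hypothesis eirr : irreflexive e.
Implicit Types (A B C S W U : {set T}) (x y z a b c r : T).

Lemma induced_sym A : symmetric (induced_rel e A).
Proof. move=> x y; rewrite /induced_rel /= esym; by case: (e y x); case: (x \in A); case: (y \in A). Qed.

Lemma conn_ind_sym A x y :
  connect (induced_rel e A) x y = connect (induced_rel e A) y x.
Proof. exact: (sym_connect_sym (induced_sym A)). Qed.

Lemma induced_mono A B x y : A \subset B ->
  connect (induced_rel e A) x y -> connect (induced_rel e B) x y.
Proof.
move=> sAB; apply: conn_mono => u v /and3P [euv uA vA].
by rewrite /induced_rel /= euv (subsetP sAB _ uA) (subsetP sAB _ vA).
Qed.

Lemma conn_in A x y : connect (induced_rel e A) x y -> x \in A -> y \in A.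
Proof.
move=> c xA.
have H : forall u v, induced_rel e A u v -> (u \in A) = (v \in A).
  by move=> u v /and3P [_ -> ->].
by rewrite -(conn_pres H c).
Qed.

Lemma connected_onP A :
  reflect (forall x y, x \in A -> y \in A -> connect (induced_rel e A) x y)
          (connected_on e A).
Proof.
apply: (iffP forall_inP) => [H x y xA yA|H x xA].
  by have /forall_inP := H x xA; apply.
by apply/forall_inP => y yA; apply: H.
Qed.

Lemma connected_from A r : r \in A ->
  (forall y, y \in A -> connect (induced_rel e A) r y) -> connected_on e A.
Proof.
move=> rA H; apply/connected_onP => x y xA yA.
apply: connect_trans (H y yA); rewrite conn_ind_sym; exact: H.
Qed.

Lemma connected_union A C a c : connected_on e A -> connected_on e C ->
  a \in A -> c \in C -> e a c -> connected_on e (A :|: C).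
Proof.
move=> /connected_onP cA /connected_onP cC aA cCc eac.
apply: (connected_from (r := a)); first by rewrite inE aA.
move=> y; rewrite inE => /orP [yA|yC].
  by apply: induced_mono (cA _ _ aA yA); apply: subsetUl.
apply: (connect_trans (y := c)).
  by apply: connect1; rewrite /induced_rel /= eac !inE aA cCc orbT.
by apply: induced_mono (cC _ _ cCc yC); apply: subsetUr.
Qed.

Lemma connected1 x : connected_on e [set x].
Proof. by apply/connected_onP => u v; rewrite !inE => /eqP -> /eqP ->. Qed.

Lemma edgesP f : reflect (exists x y, e x y /\ f = [set x; y]) (f \in edges e).
Proof.
apply: (iffP imset2P) => [[x y _]|[x [y [exy ->]]]].
  by rewrite inE => exy ->; exists x, y.
by apply: (Imset2spec (x1 := x) (x2 := y)) => //; rewrite inE.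
Qed.

Lemma neq_of_e x y : e x y -> x != y.
Proof. by move=> exy; apply/eqP => exy'; move: exy; rewrite exy' eirr. Qed.

Lemma card2I S x y : x != y ->
  (#|[set x; y] :&: S| == 1%N) = (x \in S) (+) (y \in S).
Proof.
move=> nxy.
have E : [set x; y] :&: S = (if x \in S then [set x] else set0) :|: (if y \in S then [set y] else set0).
  apply/setP => z; rewrite !inE.
  case: (eqVneq z x) => [->|nzx] /=.
    by case: (x \in S); case: (y \in S); rewrite ?inE ?eqxx ?(negbTE nxy).
  case: (eqVneq z y) => [->|nzy] /=.
    by case: (x \in S); case: (y \in S); rewrite ?inE ?eqxx // eq_sym (negbTE nxy).
  by case: (x \in S); case: (y \in S); rewrite ?inE ?(negbTE nzx) ?(negbTE nzy).
rewrite E; case: (x \in S); case: (y \in S) => /=.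
- by rewrite -/([set x; y]) cards2 nxy.
- by rewrite setU0 cards1.
- by rewrite set0U cards1.
- by rewrite setU0 cards0.
Qed.

Lemma mem_delta2 S x y : e x y -> ([set x; y] \in delta e S) = (x \in S) (+) (y \in S).
Proof.
move=> exy; rewrite inE card2I ?neq_of_e //.
have -> // : [set x; y] \in edges e by apply/edgesP; exists x, y.
Qed.

Lemma delta_sub S : delta e S \subset edges e.
Proof. by apply/subsetP => f; rewrite inE => /andP []. Qed.

Lemma deltaP S f : reflect (exists x y, [/\ e x y, f = [set x; y] & (x \in S) (+) (y \in S)])
   (f \in delta e S).
Proof.
apply: (iffP idP) => [fS|[x [y [exy -> h]]]]; last by rewrite mem_delta2.
have /edgesP [x [y [exy ef]]] := subsetP (delta_sub S) _ fS.
by exists x, y; split => //; rewrite -mem_delta2 // -ef.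
Qed.

Lemma delta_ext A B : (forall x y, e x y -> (x \in A) (+) (y \in A) = (x \in B) (+) (y \in B)) ->
  delta e A = delta e B.
Proof.
move=> H; apply/setP => f.
case fE: (f \in edges e).
  by move/edgesP: fE => [x [y [exy ->]]]; rewrite !mem_delta2 // H.
rewrite !inE fE //.
Qed.

Lemma delta_sd A B : delta e (sd A B) = sd (delta e A) (delta e B).
Proof.
apply/setP => f; rewrite in_sd.
case fE: (f \in edges e).
  move/edgesP: fE => [x [y [exy ->]]]; rewrite !mem_delta2 // !in_sd.
  by rewrite -!addbA; congr addb; rewrite addbC -addbA; congr addb; rewrite addbC.
by rewrite !inE fE.
Qed.

Lemma delta_setC A : delta e (~: A) = delta e A.
Proof. by apply: delta_ext => x y _; rewrite !inE; case: (x \in A); case: (y \in A). Qed.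

Lemma delta0 : delta e set0 = set0.
Proof. by apply/setP => f; rewrite [RHS]inE; apply/negbTE/negP => /deltaP [x [y [_ _]]]; rewrite !inE. Qed.

Lemma delta_eq0 A : delta e A = set0 -> forall x y, e x y -> (x \in A) = (y \in A).
Proof.
move=> H x y exy; have := mem_delta2 A exy; rewrite H inE.
by case: (x \in A); case: (y \in A).
Qed.

Lemma delta_neq0 A x0 x1 : connected_graph e -> x0 \in A -> x1 \notin A -> delta e A != set0.
Proof.
move=> /connected_onP cG x0A x1A; apply/eqP => d0.
have c := cG x0 x1 (in_setT _) (in_setT _).
have H : forall u v, induced_rel e setT u v -> (u \in A) = (v \in A).
  by move=> u v /and3P [euv _ _]; apply: delta_eq0.
by have := conn_pres H c; rewrite x0A (negbTE x1A).
Qed.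

End Graph.
Section Adj.
Variable T : finType.
Variable e : rel T.
Hypothesis esym : symmetric e.
Hypothesis eirr : irreflexive e.
Variable R : realType.
Implicit Types (A B C S W U X Y : {set T}) (x y z a b r : T).
Local Open Scope ring_scope.

Lemma dotcE (c : {set T} -> R) D : dotc c D = \sum_f (if f \in D then c f else 0).
Proof. by rewrite /dotc big_mkcond. Qed.

Lemma const_on W Y w : connected_on e W -> w \in W ->
  (forall x y, e x y -> x \in W -> y \in W -> (x \in Y) = (y \in Y)) ->
  forall z, z \in W -> (z \in Y) = (w \in Y).
Proof.
move=> /connected_onP cW wW H z zW.
have cz := cW _ _ wW zW.
have H' : forall u v, induced_rel e W u v -> (u \in Y) = (v \in Y).
  by move=> u v /and3P [euv uW vW]; apply: H.
by rewrite (conn_pres H' cz).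
Qed.

Lemma sd_inv X S z : (z \in X) = (z \in S) (+) (z \in sd X S).
Proof. by rewrite in_sd addbC addbK. Qed.

Lemma adj_suff S W w0 w1 : connected_graph e -> connected_on e W -> connected_on e (~: W) ->
  w0 \in W -> w1 \notin W -> cut_adj e R (delta e S) (delta e (sd S W)).
Proof.
move=> cG cW cWc w0W w1W.
split; first by exists S. by exists (sd S W).
  rewrite delta_sd // => H.
  have : delta e W = set0 by rewrite -(sdK (delta e S) (delta e W)) -H sdvv.
  by apply/eqP; apply: (delta_neq0 eirr cG w0W w1W).
pose c := fun f : {set T} => if f \in delta e W then (0:R) else if f \in delta e S then 1 else -1.
pose g := fun X f => if f \in delta e X then c f else 0.
have gle : forall X f, g X f <= g S f.
  move=> X f; rewrite /g /c.
  case: (f \in delta e W); first by case: (f \in delta e X); case: (f \in delta e S).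
  by case: (f \in delta e X); case: (f \in delta e S) => //=; rewrite ?ler01 ?lerN10 // lexx.
have gW : forall f, g (sd S W) f = g S f.
  move=> f; rewrite /g /c delta_sd // in_sd.
  by case: (f \in delta e W); case: (f \in delta e S); rewrite ?addbF ?addbT //=; case: (f \in delta e (sd S W)).
exists c; split.
  by rewrite !dotcE; apply: eq_bigr => f _; symmetry; exact: (gW f).
move=> X; rewrite !dotcE; split.
  by apply: ler_sum => f _; exact: gle.
move=> Heq.
have pw : forall f, g X f = g S f.
  have H0 : \sum_f (g S f - g X f) = 0 by rewrite sumrB Heq subrr.
  have Hnn : forall i, xpredT i -> 0 <= g S i - g X i by move=> i _; rewrite subr_ge0 gle.
  move=> f; have := psumr_eq0P Hnn H0 (i := f) isT.
  by move/eqP; rewrite subr_eq0 => /eqP ->.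
pose Y := sd X S.
have key : forall x y, e x y -> (x \in W) = (y \in W) -> (x \in Y) = (y \in Y).
  move=> x y exy hW.
  have := pw [set x; y]; rewrite /g /c !mem_delta2 // hW addbb.
  rewrite !in_sd.
  case: (x \in X); case: (y \in X); case: (x \in S); case: (y \in S) => //=;
   move/eqP; rewrite ?oppr_eq0 ?oner_eq0 ?(eq_sym 0) ?oppr_eq0 ?oner_eq0 //.
have cY : forall z, (z \in Y) = if z \in W then (w0 \in Y) else (w1 \in Y).
  move=> z; case: ifP => zW.
    apply: (const_on cW w0W _ zW) => x y exy xW yW.
    by apply: (key x y exy); rewrite xW yW.
  have w1W' : w1 \in ~: W by rewrite inE.
  have zW' : z \in ~: W by rewrite inE zW.
  apply: (const_on cWc w1W' _ zW') => x y exy; rewrite !in_setC => xW yW.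
  by apply: key => //; rewrite (negbTE xW) (negbTE yW).
case h: ((w0 \in Y) == (w1 \in Y)).
  left; apply: (delta_ext eirr) => x y exy.
  rewrite (sd_inv X S x) (sd_inv X S y) -/Y (cY x) (cY y) (eqP h).
  by case: (x \in W); case: (y \in W); case: (x \in S); case: (y \in S); case: (w1 \in Y).
right; apply: (delta_ext eirr) => x y exy.
rewrite (sd_inv X S x) (sd_inv X S y) -/Y (cY x) (cY y) (in_sd S W x) (in_sd S W y).
move: h; case: (w0 \in Y); case: (w1 \in Y) => // _;
by case: (x \in W); case: (y \in W); case: (x \in S); case: (y \in S).
Qed.
End Adj.

Section Upper.
Variable T : finType.
Variable e : rel T.
Hypothesis esym : symmetric e.
Hypothesis eirr : irreflexive e.
Variable R : realType.
Implicit Types (A B C S W U X Y K : {set T}) (x y z a b r w : T).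

Lemma walk0 D : skel_walk e R 0 D D.
Proof. by exists [::]; split => // i. Qed.

Lemma walk_cons D0 D1 D2 k : cut_adj e R D0 D1 -> skel_walk e R k D1 D2 ->
  skel_walk e R k.+1 D0 D2.
Proof.
move=> a01 [p [sp lp H]]; exists (D1 :: p); split => //=; first by rewrite sp.
case=> [|i] /= ilt; first by [].
have := H i ilt.
rewrite (set_nth_default D1 D0 (s := D1 :: p)) /= ?sp 1?ltnW //.
by rewrite (set_nth_default D1 D0 (s := p)) ?sp.
Qed.

Definition hrel U : rel T := [rel x y | e x y && ((x \in U) == (y \in U))].
Definition Areach U r : {set T} := [set z | connect (hrel U) r z].

Lemma Afull U r : Areach U r = setT -> delta e U = set0.
Proof.
move=> H.
have cz : forall z, (z \in U) = (r \in U).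
  move=> z; have : z \in Areach U r by rewrite H inE.
  rewrite inE => c; symmetry; apply: (conn_pres _ c).
  by move=> u v /andP [_ /eqP].
apply/setP => f; rewrite [RHS]inE; apply/negbTE/negP => /(deltaP eirr) [x [y [_ _]]].
by rewrite !cz addbb.
Qed.

Lemma sdSUK S U K : sd (sd S K) (sd U K) = sd S U.
Proof. by apply/setP => x; rewrite !in_sd; case: (x \in S); case: (x \in U); case: (x \in K). Qed.

Lemma step U r : connected_graph e -> Areach U r != setT ->
  exists K, [/\ connected_on e K, connected_on e (~: K), (exists k0, k0 \in K), r \notin K
     & Areach U r \proper Areach (sd U K) r].
Proof.
move=> cG nA.
set A := Areach U r.
have rA : r \in A by rewrite inE connect0.
have [z zA] : exists z, z \notin A.
  case: (pickP (fun x => x \notin A)) => [x hx|h]; first by exists x.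
  have AT : A = setT by apply/setP => x; rewrite [RHS]inE; move: (h x) => /negbFE.
  by move/eqP: nA; rewrite AT.
have crz : connect (induced_rel e setT) r z by move/(connected_onP e): cG; apply; rewrite inE.
have [a [b [_ aA bA eab]]] := exit_lemma (P := fun x => x \in A) crz rA zA.
have {}eab : e a b by case/and3P: eab.
set K := [set x | connect (induced_rel e (~: A)) b x].
have bK : b \in K by rewrite inE connect0.
have KA : forall x, x \in K -> x \notin A.
  move=> x; rewrite inE => c; have := conn_in c; rewrite !in_setC; apply; exact: bA.
have rK : r \notin K by apply/negP => /KA; rewrite rA.
have reachA : forall w B, w \in A -> A \subset B -> connect (induced_rel e B) r w.
  move=> w B; rewrite inE => c sAB.
  apply: conn_mono (reach_restrict c) => x y /andP [/andP [/andP [exy _] cx] cy].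
  by rewrite /induced_rel /= exy !(subsetP sAB) // inE.
have sAK : A \subset ~: K by apply/subsetP => x xA; rewrite inE; apply/negP => /KA; rewrite xA.
exists K; split => //.
- apply: (connected_from esym bK) => y; rewrite inE => c.
  apply: conn_mono (reach_restrict c) => u v /andP [/andP [/and3P [euv _ _] cu] cv].
  by rewrite /induced_rel /= euv !inE cu cv.
- have rK' : r \in ~: K by rewrite inE.
  apply: (connected_from esym rK') => w; rewrite inE => wK.
  case wA: (w \in A); first exact: reachA.
  have cwr : connect (induced_rel e setT) w r by move/(connected_onP e): cG; apply; rewrite inE.
  have wA' : w \in ~: A by rewrite inE wA.
  have rA' : r \notin ~: A by rewrite inE rA.
  have [a' [b' [c1 a'A b'A eab']]] := exit_lemma (P := fun x => x \in ~: A) cwr wA' rA'.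
  have {}eab' : e a' b' by case/and3P: eab'.
  have c2 : connect (induced_rel e (~: A)) w a'.
    apply: conn_mono c1 => u v /andP [/andP [/and3P [euv _ _] uA] vA].
    by rewrite /induced_rel /= euv uA vA.
  have notK : forall x, connect (induced_rel e (~: A)) w x -> x \notin K.
    move=> x cx; apply/negP; rewrite inE => cbx; move: wK; rewrite inE.
    apply/negP; rewrite negbK; apply: (connect_trans cbx).
    by rewrite (conn_ind_sym esym).
  have c3 : connect (induced_rel e (~: K)) w a'.
    apply: conn_mono (reach_restrict c2) => u v /andP [/andP [/and3P [euv _ _] cu] cv].
    by rewrite /induced_rel /= euv !in_setC (notK _ cu) (notK _ cv).
  rewrite (conn_ind_sym esym); apply: (connect_trans c3).
  apply: (connect_trans (y := b')).
    have b'A2 : b' \in A by move: b'A; rewrite in_setC negbK.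
    apply: connect1; rewrite /induced_rel /= eab' !in_setC (notK _ c2) /=.
    by apply/negP => /KA; rewrite b'A2.
  have b'A2 : b' \in A by move: b'A; rewrite in_setC negbK.
  by rewrite (conn_ind_sym esym); apply: reachA.
- by exists b.
- have sub : A \subset Areach (sd U K) r.
    apply/subsetP => x; rewrite inE => c; rewrite inE.
    apply: conn_mono (reach_restrict c) => u v /andP [/andP [/andP [euv hu] cu] cv].
    have uK : u \notin K by apply/negP => /KA; rewrite inE cu.
    have vK : v \notin K by apply/negP => /KA; rewrite inE cv.
    by rewrite /hrel /= euv !in_sd (negbTE uK) (negbTE vK) !addbF.
  apply/properP; split => //; exists b => //.
  have aA' := subsetP sub _ aA; rewrite inE in aA'; rewrite inE.
  apply: (connect_trans aA'); apply: connect1.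
  have aK : a \notin K by apply/negP => /KA; rewrite aA.
  rewrite /hrel /= eab !in_sd bK (negbTE aK) addbF addbT.
  move: bA; rewrite inE; apply: contraR => h.
  apply: (connect_trans (y := a)); first by rewrite inE in aA.
  apply: connect1; rewrite /hrel /= eab.
  by move: h; case: (a \in U); case: (b \in U).
Qed.

Lemma walk_from : connected_graph e -> forall m U S r,
  (#|T| - #|Areach U r| <= m)%N ->
  exists2 k, (k <= m)%N & skel_walk e R k (delta e S) (delta e (sd S U)).
Proof.
move=> cG; elim=> [|m IH] U S r hm.
  have : Areach U r = setT.
    by apply/eqP; rewrite eqEcard subsetT cardsT /=; move: hm; rewrite leqn0 subn_eq0.
  move/Afull => d0; exists 0%N => //.
  by rewrite (delta_sd eirr) d0 sd0; exact: walk0.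
case hA: (Areach U r == setT).
  move/eqP/Afull: hA => d0; exists 0%N => //.
  by rewrite (delta_sd eirr) d0 sd0; exact: walk0.
have [K [cK cKc [k0 k0K] rK prop]] := step cG (negbT hA).
have hm' : (#|T| - #|Areach (sd U K) r| <= m)%N.
  have h2 : (#|Areach (sd U K) r| <= #|T|)%N.
    by rewrite -cardsT; apply: subset_leq_card; apply: subsetT.
  have h3 := proper_card prop.
  lia.
have [k km w] := IH (sd U K) (sd S K) r hm'.
exists k.+1 => //.
rewrite sdSUK in w; apply: walk_cons w.
have k0K' : k0 \in K by [].
have rKc : r \notin K by [].
exact: (@adj_suff T e eirr R S K k0 r cG cK cKc k0K' rKc).
Qed.
End Upper.

Section Conv.
Variable T : finType.
Variable e : rel T.
Hypothesis esym : symmetric e.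
Hypothesis eirr : irreflexive e.
Variable R : realType.
Implicit Types (A B C S W U X Y K : {set T}) (x y z a b r w : T).
Local Open Scope ring_scope.

Lemma conv S1 W D2 : connected_graph e -> cut_adj e R (delta e S1) D2 ->
  D2 = delta e (sd S1 W) -> connected_on e W.
Proof.
move=> cG [_ _ neq [c [eqv Hmax]]] D2E.
case: (boolP (connected_on e W)) => // nc; exfalso.
move/forall_inPn: nc => [x xW /forall_inPn [y yW nxy]].
set W1 := [set z in W | connect (induced_rel e W) x z].
set W2 := W :\: W1.
have xW1 : x \in W1 by rewrite inE xW connect0.
have yW1 : y \notin W1 by rewrite inE yW.
have yW2 : y \in W2 by rewrite inE yW1 yW.
have xW2 : x \notin W2 by rewrite inE xW1.
have noedge : forall a b, e a b -> a \in W1 -> b \in W -> b \in W1.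
  move=> a b eab; rewrite !inE => /andP [aW ca] bW; rewrite bW /=.
  by apply: (connect_trans ca); apply: connect1; rewrite /induced_rel /= eab aW bW.
pose X1 := sd S1 W1; pose X2 := sd S1 W2.
have Hsum : dotc c (delta e X1) + dotc c (delta e X2) = dotc c (delta e S1) + dotc c D2.
  rewrite D2E !dotcE -!big_split /=; apply: eq_bigr => f _.
  case fE: (f \in edges e); last first.
    have nf : forall Z, f \in delta e Z = false by move=> Z; rewrite inE fE.
    by rewrite !nf.
  move/edgesP: fE => [a [b [eab ->]]]; rewrite !mem_delta2 // !in_sd.
  have hyp : [&& (a \in W1) ==> (a \in W), (b \in W1) ==> (b \in W),
     ((a \in W1) && (b \in W)) ==> (b \in W1) & ((b \in W1) && (a \in W)) ==> (a \in W1)].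
    apply/and4P; split; apply/implyP.
    - by rewrite inE => /andP [].
    - by rewrite inE => /andP [].
    - by case/andP => h1 h2; apply: (noedge a b eab).
    - by case/andP => h1 h2; apply: (noedge b a _ h1 h2); rewrite esym.
  rewrite /W2 !in_setD.
  move: hyp; case: (a \in W1); case: (b \in W1); case: (a \in W); case: (b \in W) => //= _;
  by case: (a \in S1); case: (b \in S1) => /=; rewrite ?addr0 ?add0r.
have le1 := (Hmax X1).1; have le2 := (Hmax X2).1.
have e1 : dotc c (delta e X1) = dotc c (delta e S1).
  by apply/eqP; rewrite eq_le le1 /=; lra.
have [h|h] := (Hmax X1).2 e1.
  have : delta e W1 = set0.
    by rewrite -(sdK (delta e S1) (delta e W1)) -(delta_sd eirr) -/X1 h sdvv.
  by apply/eqP; apply: (delta_neq0 eirr cG xW1 yW1).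
have hW : delta e W1 = delta e W.
  rewrite -(sdK (delta e S1) (delta e W1)) -(delta_sd eirr) -/X1 h D2E (delta_sd eirr).
  by rewrite sdK.
have WE : W = sd W1 W2.
  apply/setP => z; rewrite in_sd /W2 in_setD.
  have : (z \in W1) ==> (z \in W) by apply/implyP; rewrite inE => /andP [].
  by case: (z \in W1); case: (z \in W).
have : delta e W2 = set0.
  rewrite -(sdK (delta e W1) (delta e W2)) -(delta_sd eirr) -WE hW sdvv //.
by apply/eqP; apply: (delta_neq0 eirr cG yW2 xW2).
Qed.

End Conv.

Section Grow.
Variable T : finType.
Variable e : rel T.
Hypothesis esym : symmetric e.
Hypothesis eirr : irreflexive e.
Implicit Types (A B C S W U X Y K H : {set T}) (x y z a b r w v : T).

Lemma mem_edges_in2 Y a b : e a b -> ([set a; b] \in edges_in e Y) = (a \in Y) && (b \in Y).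
Proof.
move=> eab; rewrite inE subUset !sub1set.
by have -> : [set a; b] \in edges e by apply/edgesP; exists a, b.
Qed.

Lemma edges_inP Y f : reflect (exists a b, [/\ e a b, f = [set a; b], a \in Y & b \in Y])
  (f \in edges_in e Y).
Proof.
apply: (iffP idP) => [fY|[a [b [eab -> aY bY]]]]; last by rewrite mem_edges_in2 // aY bY.
have : f \in edges e by move: fY; rewrite inE => /andP [].
move/edgesP => [a [b [eab fE]]]; exists a, b; split => //;
by move: fY; rewrite fE mem_edges_in2 // => /andP [].
Qed.

Lemma edges_in_mono Y Y' : Y \subset Y' -> edges_in e Y \subset edges_in e Y'.
Proof.
move=> sY; apply/subsetP => f /edges_inP [a [b [eab -> aY bY]]].
by rewrite mem_edges_in2 // !(subsetP sY).
Qed.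

Lemma edges_grow B H : H \subset B -> connected_on e B -> connected_on e H -> H != set0 ->
  (#|edges_in e H| + #|B| <= #|edges_in e B| + #|H|)%N.
Proof.
move Hn : #|B :\: H| => n; elim: n H Hn => [|n IH] H Hn sHB cB cH nH.
  have -> : B = H.
    apply/eqP; rewrite eqEsubset; apply/andP; split => //.
    by rewrite -setD_eq0 -cards_eq0 Hn.
  by [].
have [z zBH] : exists z, z \in B :\: H by apply/set0Pn; rewrite -cards_eq0 Hn.
have [x0 x0H] := set0Pn _ nH.
have zB : z \in B by move: zBH; rewrite inE => /andP [].
have zH : z \notin H by move: zBH; rewrite inE => /andP [].
have c0 : connect (induced_rel e B) x0 z by move/(connected_onP e): cB; apply => //; apply: (subsetP sHB).
have [a [b [_ aH bH hab]]] := exit_lemma (P := fun u => u \in H) c0 x0H zH.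
move/and3P: hab => [eab aB bB].
set H' := b |: H.
have cH' : connected_on e H'.
  rewrite /H' setUC; apply: (connected_union esym cH (connected1 e b) aH _ eab).
  by rewrite inE.
have sH'B : H' \subset B by rewrite /H' subUset sub1set bB sHB.
have cardH' : #|H'| = (#|H|.+1)%N by rewrite /H' cardsU1 bH.
have Hn' : #|B :\: H'| = n.
  have E : (B :\: H) :\ b = B :\: H'.
    by apply/setP => u; rewrite /H' !inE negb_or andbA.
  have := cardsD1 b (B :\: H); rewrite Hn E inE bH bB /= add1n.
  by move=> [->].
have nH' : H' != set0 by apply/set0Pn; exists b; rewrite /H' setU11.
have := IH H' Hn' sH'B cB cH' nH'.
have ecard : (#|edges_in e H|.+1 <= #|edges_in e H'|)%N.
  have sub : [set a; b] |: edges_in e H \subset edges_in e H'.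
    rewrite subUset sub1set mem_edges_in2 // !inE eqxx aH orbT /=.
    by apply: edges_in_mono; apply/subsetP => u uH; rewrite inE uH orbT.
  have := subset_leq_card sub; rewrite cardsU1 mem_edges_in2 // (negbTE bH) andbF /=.
  by rewrite add1n.
move=> h; rewrite cardH' in h.
move: h ecard; set p := #|edges_in e H|; set q := #|edges_in e H'|; set r := #|edges_in e B|.
move: p q r #|B| #|H| => p q r s t; clear.
lia.
Qed.

End Grow.

Section Bond.
Variable T : finType.
Variable e : rel T.
Hypothesis esym : symmetric e.
Hypothesis eirr : irreflexive e.
Implicit Types (A B C S W U X Y K H : {set T}) (x y z a b r w v : T).

Lemma arith1 (g1a A1 E1 g2a A2 E2 U12 U E3 EX X : nat) :
  (g1a + A1 <= E1 + 1)%N -> (g2a + A2 <= E2 + 1)%N -> (U <= EX)%N -> U = (U12 + E3)%N ->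
  U12 = (E1 + E2)%N -> (A1 + A2)%N = X -> (4 <= E3)%N -> (X + 2 <= EX)%N.
Proof. lia. Qed.

Lemma arith2 (EB B H EH : nat) : (EB <= 2 + (B - 1))%N -> (H + 2 <= EH)%N ->
  (EH + B <= EB + H)%N -> (1 <= B)%N -> False.
Proof. lia. Qed.

Definition PW W X := [&& connected_on e (X :&: W), connected_on e (X :\: W)
   & (4 <= #|delta e W :&: edges_in e X|)%N].

Lemma PW_C W X : PW (~: W) X = PW W X.
Proof.
rewrite /PW (delta_setC eirr) -setDE.
have -> : X :\: ~: W = X :&: W by rewrite setDE setCK.
by rewrite andbA [connected_on e (X :\: W) && _]andbC -andbA.
Qed.

Lemma cross_edge W X : PW W X -> exists a b, [/\ e a b, a \in X, b \in X, a \in W & b \notin W].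
Proof.
case/and3P => _ _ c4.
have [f] : exists f, f \in delta e W :&: edges_in e X.
  by apply/set0Pn; rewrite -cards_eq0; apply/negP => /eqP h; rewrite h in c4.
rewrite inE => /andP [fd /edges_inP [a [b [eab fE aX bX]]]].
move: fd; rewrite fE mem_delta2 //.
case aW: (a \in W) => /= bW.
  by exists a, b; split.
exists b, a; split => //; first by rewrite esym.
by rewrite aW.
Qed.

Lemma count_PW W X : PW W X -> (#|X| + 2 <= #|edges_in e X|)%N.
Proof.
move=> P; have [a [b [eab aX bX aW bW]]] := cross_edge P.
case/and3P: P => c1 c2 c4.
set A1 := X :&: W; set A2 := X :\: W.
have aA1 : a \in A1 by rewrite inE aX aW.
have bA2 : b \in A2 by rewrite inE bX bW.
have g1 := edges_grow esym (B := A1) (H := [set a]).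
have g2 := edges_grow esym (B := A2) (H := [set b]).
have {g1} g1 := g1 _ c1 (connected1 e a). 
have {g2} g2 := g2 _ c2 (connected1 e b).
rewrite sub1set cards1 in g1; rewrite sub1set cards1 in g2.
have {g1} g1 := g1 aA1; have {g2} g2 := g2 bA2.
have n1 : [set a] != set0 by apply/set0Pn; exists a; rewrite set11.
have n2 : [set b] != set0 by apply/set0Pn; exists b; rewrite set11.
have {g1} g1 := g1 n1; have {g2} g2 := g2 n2.
set E1 := edges_in e A1; set E2 := edges_in e A2; set E3 := delta e W :&: edges_in e X.
have d12 : E1 :&: E2 = set0.
  apply/setP => f; rewrite [RHS]inE; apply/negbTE; rewrite in_setI.
  apply/negP => /andP [/edges_inP [p [q [_ fE pA _]]] f2].
  have : p \in A2.
    move: f2; rewrite inE => /andP [_ /subsetP]; apply; by rewrite fE !inE eqxx.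
  by move: pA; rewrite !inE => /andP [_ ->].
have d3 : (E1 :|: E2) :&: E3 = set0.
  apply/setP => f; rewrite [RHS]inE; apply/negbTE; rewrite in_setI in_setU.
  apply/negP => /andP [h12 h3].
  move: h3; rewrite in_setI => /andP [fd _].
  case/orP: h12 => /edges_inP [p [q [epq fE pA qA]]];
  move: fd; rewrite fE mem_delta2 //; move: pA qA; rewrite !inE.
    by move=> /andP [_ ->] /andP [_ ->].
  by move=> /andP [/negbTE -> _] /andP [/negbTE -> _].
have sub : E1 :|: E2 :|: E3 \subset edges_in e X.
  rewrite !subUset; apply/andP; split; first (apply/andP; split).
  - by apply: edges_in_mono; apply: subsetIl.
  - by apply: edges_in_mono; apply: subsetDl.
  - by apply: subsetIr.
have cs := subset_leq_card sub.
have u1 := cardsUI (E1 :|: E2) E3; rewrite d3 cards0 addn0 in u1.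
have u2 := cardsUI E1 E2; rewrite d12 cards0 addn0 in u2.
have cx := cardsID W X.
rewrite -/A1 -/A2 in cx.
exact: (arith1 g1 g2 cs u1 u2 cx c4).
Qed.

Lemma side_conn W H v : PW W H -> (forall X, PW W X -> (#|H| <= #|X|)%N) ->
  v \in H -> v \in W -> connected_on e (H :\ v).
Proof.
move=> PH Hmin vH vW.
have [a0 [b0 [eab0 a0H b0H a0W b0W]]] := cross_edge PH.
move: (PH) => /and3P [cA cB c4].
set A := H :&: W; set Bs := H :\: W.
have b0Bs : b0 \in Bs by rewrite inE b0W b0H.
have nvW : forall u, u \notin W -> u != v by move=> u uW; apply/eqP => uv; rewrite uv vW in uW.
have BsHv : Bs \subset H :\ v.
  by apply/subsetP => u; rewrite !inE => /andP [uW ->]; rewrite nvW.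
have claim : forall z, z \in H :\ v -> z \in W ->
    exists2 b, b \in Bs & connect (induced_rel e (H :\ v)) z b.
  move=> z zHv zW.
  case: (boolP [exists b in Bs, connect (induced_rel e (H :\ v)) z b]) => [/exists_inP [b bB cb]|nex].
    by exists b.
  exfalso.
  set C := [set u | connect (induced_rel e (H :\ v)) z u].
  have zC : z \in C by rewrite inE connect0.
  have CHv : forall u, u \in C -> u \in H :\ v.
    by move=> u; rewrite inE => cu; apply: (conn_in cu).
  have CW : forall u, u \in C -> u \in W.
    move=> u uC; apply/negPn/negP => uW.
    move/exists_inPn: nex => /(_ u); rewrite inE uW /=.
    have := CHv u uC; rewrite !inE => /andP [_ ->] /(_ isT).
    by move: uC; rewrite inE => ->.
  have Cclosed : forall u w, u \in C -> w \in H :\ v -> e u w -> w \in C.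
    move=> u w uC wHv euw; move: (uC); rewrite !inE => cu.
    by apply: (connect_trans cu); apply: connect1; rewrite /induced_rel /= euw CHv.
  set X' := H :\: C.
  have PX' : PW W X'.
    apply/and3P; split.
    - have vX : v \in X' :&: W.
        rewrite in_setI in_setD vW vH !andbT; apply/negP => /CHv; by rewrite !inE eqxx.
      apply: (connected_from esym vX) => y yX.
      case: (eqVneq y v) => [->|yv]; first exact: connect0.
      rewrite (conn_ind_sym esym).
      have yA : y \in A by move: yX; rewrite !inE => /andP [/andP [_ ->] ->].
      have vA : v \in A by rewrite inE vH vW.
      have cyv := (connected_onP e _ cA) y v yA vA.
      have yP : y \in (X' :&: W) :\ v by rewrite in_setD1 yv yX.
      have vP : v \notin (X' :&: W) :\ v by rewrite in_setD1 eqxx.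
      have [a [b [c1 aP bP iab]]] := exit_lemma (P := fun u => u \in (X' :&: W) :\ v) cyv yP vP.
      move/and3P: iab => [eab aA bA].
      have bv : b = v.
        apply/eqP; apply/negPn/negP => bv.
        move: bA; rewrite in_setI => /andP [bH bW].
        have bC : b \in C.
          by move: bP; rewrite in_setD1 in_setI in_setD bv bH bW /= !andbT => /negPn.
        have aHv : a \in H :\ v.
          by move: aP; rewrite !in_setD1 in_setI in_setD => /andP [-> /andP [/andP [_ ->] _]].
        have := Cclosed b a bC aHv; rewrite esym => /(_ eab) aC.
        by move: aP; rewrite in_setD1 in_setI in_setD aC /= andbF.
      apply: (connect_trans (y := a)).
        apply: conn_mono c1 => p q /andP [/andP [/and3P [epq _ _] pP] qP].
        move: pP qP; rewrite /induced_rel /= epq !in_setD1 => /andP [_ ->] /andP [_ ->] //.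
      apply: connect1; rewrite /induced_rel /= -bv eab.
      move: aP; rewrite in_setD1 => /andP [_ ->] /=.
      by rewrite bv.
    - have -> : X' :\: W = Bs.
        apply/setP => u; rewrite !in_setD; case uW: (u \in W) => //=.
        case uC: (u \in C) => //=.
        by rewrite (CW u uC) in uW.
      exact: cB.
    - apply: leq_trans c4 _; apply: subset_leq_card.
      apply/subsetP => f; rewrite !in_setI => /andP [fd /edges_inP [p [q [epq fE pH qH]]]].
      rewrite fd /=.
      have nC : forall p q, e p q -> p \in H -> q \in H -> p \in W -> q \notin W ->
          (p \notin C) && (q \notin C).
        move=> p' q' e' p'H q'H p'W q'W.
        have q'C : q' \notin C by apply/negP => /CW; rewrite (negbTE q'W).
        rewrite q'C andbT; apply/negP => p'C.
        have q'Hv : q' \in H :\ v by rewrite !inE q'H nvW.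
        by move: q'C; rewrite (Cclosed p' q' p'C q'Hv e').
      move: fd; rewrite fE mem_delta2 // mem_edges_in2 // !in_setD pH qH !andbT.
      case pW: (p \in W) => /= qW.
        by have /andP [-> ->] := nC p q epq pH qH pW qW.
      have eqp : e q p by rewrite esym.
      have npW : p \notin W by rewrite pW.
      by have /andP [-> ->] := nC q p eqp qH pH qW npW.
  have := Hmin X' PX'.
  have : X' \proper H.
    apply/properP; split; first exact: subsetDl.
    exists z; first by move: (CHv z zC); rewrite in_setD1 => /andP [_ ->].
    by rewrite in_setD zC.
  move/proper_card; rewrite ltnNge => /negP; exact.
have b0Hv : b0 \in H :\ v by apply: (subsetP BsHv).
apply: (connected_from esym b0Hv) => y yHv.
case yW: (y \in W).
  have [b bB cyb] := claim y yHv yW.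
  apply: (connect_trans (y := b)).
    by apply: (induced_mono BsHv); apply: (connected_onP e _ cB).
  by rewrite (conn_ind_sym esym).
have yB : y \in Bs by move: yHv; rewrite !inE yW => /andP [_ ->].
by apply: (induced_mono BsHv); apply: (connected_onP e _ cB).
Qed.

Lemma bic_min W H : PW W H -> (forall X, PW W X -> (#|H| <= #|X|)%N) -> biconnected_on e H.
Proof.
move=> PH Hmin.
have [a0 [b0 [eab0 a0H b0H a0W b0W]]] := cross_edge PH.
move: (PH) => /and3P [cA cB _].
apply/andP; split.
  rewrite -(setID H W); apply: (connected_union esym cA cB _ _ eab0);
  by rewrite ?in_setI ?in_setD ?a0H ?a0W ?b0H ?b0W.
apply/forall_inP => v vH.
case vW: (v \in W); first exact: (side_conn PH Hmin vH vW).
apply: (side_conn (W := ~: W)) => //.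
- by rewrite PW_C.
- by move=> X; rewrite PW_C; apply: Hmin.
- by rewrite inE vW.
Qed.

Lemma bond3 W : almost_tree e 2 -> connected_on e W -> connected_on e (~: W) ->
  (#|delta e W| <= 3)%N.
Proof.
move=> aT cW cWc; rewrite leqNgt; apply/negP => big.
have PT : PW W setT.
  apply/and3P; split; first by rewrite setTI.
    by rewrite setTD.
  have -> : delta e W :&: edges_in e setT = delta e W.
    apply/setIidPl/subsetP => f fd; rewrite inE subsetT andbT.
    exact: (subsetP (delta_sub e W)).
  exact: big.
case: (arg_minnP (fun X => #|X|) PT) => H PH Hmin.
have bic := bic_min PH Hmin.
have [a0 [b0 [eab0 a0H _ _ _]]] := cross_edge PH.
have Hn0 : H != set0 by apply/set0Pn; exists a0.
have := arg_maxnP (fun B => #|B|) (P := fun B => biconnected_on e B && (H \subset B)) (i0 := H).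
rewrite bic subxx => /(_ isT).
case=> B /andP [bB sHB] Bmax.
have bcB : biconnected_component e B.
  rewrite /biconnected_component bB /=; apply/forallP => B'; apply/implyP => pB'.
  apply/negP => bB'.
  have := Bmax B'; rewrite bB' (subset_trans sHB (proper_sub pB')) => /(_ isT).
  by rewrite /geq /= leqNgt (proper_card pB').
move/andP: aT => [_ /forallP /(_ B)]; rewrite bcB /= => hB.
have cnt := count_PW PH.
have cB : connected_on e B by case/andP: bB.
have cH : connected_on e H by case/andP: bic.
have grow := edges_grow esym sHB cB cH Hn0.
have : (1 <= #|B|)%N by apply/card_gt0P; exists a0; apply: (subsetP sHB).
exact: (arith2 hB cnt grow).
Qed.

End Bond.

Lemma find_max (Q : nat -> Prop) N m : Q m -> (forall j, Q j -> (j <= N)%N) ->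
  exists d, [/\ Q d, ~ Q d.+1 & (m <= d)%N].
Proof.
move=> Qm HN; move: (leqnn (N - m)); move: {2}(N - m) => t.
elim: t m Qm => [|t IH] m Qm ht.
  exists m; split => // Qm1; have := HN _ Qm1; lia.
case: (classic (Q m.+1)) => [Qm1|nQ]; last by exists m.
have ht' : (N - m.+1 <= t)%N by lia.
have [d [Qd nQd md]] := IH m.+1 Qm1 ht'.
by exists d; split => //; exact: ltnW.
Qed.

Lemma arith3 (n q c k : nat) : (n - 1 <= c)%N -> (c <= 3 * k)%N -> (k < q)%N ->
  (q * 3 <= n)%N -> False.
Proof. lia. Qed.

Lemma arith4 (a n g d : nat) : (a + n <= g + 1)%N -> (g <= d)%N -> (n - 1 <= d)%N.
Proof. lia. Qed.

Section Final.
Variable T : finType.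
Variable e : rel T.
Hypothesis esym : symmetric e.
Hypothesis eirr : irreflexive e.
Variable R : realType.
Implicit Types (A B C S W U X Y K H : {set T}) (x y z a b r w v : T).

Lemma adj_small D1 D2 : almost_tree e 2 -> cut_adj e R D1 D2 -> (#|sd D1 D2| <= 3)%N.
Proof.
move=> aT adj; have cG : connected_graph e by case/andP: aT.
have [[S1 D1E] [S2 D2E] _ _] := adj.
rewrite D1E in adj *.
set W := sd S1 S2.
have D2W : D2 = delta e (sd S1 W) by rewrite /W sdK.
have cW := conv esym eirr cG adj D2W.
have D2W' : D2 = delta e (sd S1 (~: W)).
  by rewrite D2W (delta_sd eirr S1 W) (delta_sd eirr S1 (~: W)) (delta_setC eirr).
have cWc := conv esym eirr cG adj D2W'.
rewrite D2W (delta_sd eirr S1 W) sdK.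
exact: bond3.
Qed.

Lemma walk_bound k D1 D2 : almost_tree e 2 -> skel_walk e R k D1 D2 ->
  (#|sd D1 D2| <= 3 * k)%N.
Proof.
move=> aT [p [sp lp H]].
have aux : forall i, (i <= k)%N -> (#|sd D1 (nth D1 (D1 :: p) i)| <= 3 * i)%N.
  elim=> [|i IH] ik; first by rewrite /= sdvv cards0.
  have h3 := card_sd_tri D1 (nth D1 (D1 :: p) i) (nth D1 (D1 :: p) i.+1).
  have h2 := adj_small aT (H i ik).
  have h1 := IH (ltnW ik).
  apply: leq_trans h3 _; rewrite mulnSr; exact: leq_add h1 h2.
by have := aux k (leqnn k); rewrite -sp -last_nth lp.
Qed.

Lemma maxcut : connected_graph e -> exists U, (#|T| - 1 <= #|delta e U|)%N.
Proof.
move=> cG.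
case: (arg_maxnP (fun U => #|delta e U|) (P := xpredT) (i0 := set0) isT) => U _ Umax.
exists U.
set eU := [rel x y | e x y && ((x \in U) != (y \in U))].
have eUsym : symmetric eU by move=> x y; rewrite /= esym eq_sym.
have cU : connected_graph eU.
  apply/(connected_onP eU) => x y _ _; apply/negPn/negP => nc.
  set K := [set z | connect (induced_rel eU setT) x z].
  have xK : x \in K by rewrite inE connect0.
  have yK : y \notin K by rewrite inE.
  have disj : forall f, f \in delta e K -> f \notin delta e U.
    move=> f /(deltaP eirr) [a [b [eab fE hK]]]; rewrite fE mem_delta2 //.
    have step : forall a b, e a b -> a \in K -> b \notin K -> ~~ ((a \in U) (+) (b \in U)).
      move=> a' b' e' a'K b'K; apply/negP => h.
      have : b' \in K.
        move: a'K; rewrite !inE => ca; apply: (connect_trans ca); apply: connect1.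
        by rewrite /induced_rel /= e' !inE andbT; move: h; case: (a' \in U); case: (b' \in U).
      by rewrite (negbTE b'K).
    move: hK; case aK: (a \in K); case bK: (b \in K) => //= _.
      by apply: step; rewrite ?aK ?bK.
    by rewrite addbC; apply: step; rewrite ?aK ?bK // esym.
  have big : #|delta e (sd U K)| = (#|delta e U| + #|delta e K|)%N.
    rewrite (delta_sd eirr).
    have -> : sd (delta e U) (delta e K) = delta e U :|: delta e K.
      apply/setP => f; rewrite in_sd in_setU.
      case fK: (f \in delta e K); last by rewrite addbF orbF.
      by rewrite (negbTE (disj f fK)).
    rewrite -cardsUI.
    have -> : delta e U :&: delta e K = set0.
      apply/setP => f; rewrite in_setI [RHS]inE.
      by case fK: (f \in delta e K); rewrite ?andbF // (negbTE (disj f fK)).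
    by rewrite cards0 addn0.
  have h1 := Umax (sd U K) isT; rewrite /geq /= big in h1.
  move: h1; rewrite -{2}(addn0 #|delta e U|) leq_add2l leqn0 cards_eq0.
  by rewrite (negbTE (delta_neq0 eirr cG xK yK)).
case: (posnP #|T|) => [->|nT]; first by [].
have [x0 _] : exists x0, x0 \in T by apply/card_gt0P.
have n0 : [set x0] != set0 by apply/set0Pn; exists x0; rewrite set11.
have grow := edges_grow eUsym (subsetT [set x0]) cU (connected1 eU x0) n0.
rewrite cardsT cards1 in grow.
apply: (arith4 grow); apply: subset_leq_card; apply/subsetP => f.
move/edges_inP => [a [b [eab -> _ _]]]; move: eab => /andP [eab h].
by rewrite mem_delta2 //; move: h; case: (a \in U); case: (b \in U).
Qed.
End Final.

Theorem theorem6 (R : realType) (T : finType) (e : rel T) :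
  simple_graph e -> almost_tree e 2 ->
  exists d : nat, is_skel_diameter e R d /\ (#|T| %/ 3 <= d <= #|T| - 1)%N.
Proof.
move=> [esym eirr] aT.
have cG : connected_graph e by case/andP: aT.
have UB : forall D1 D2, is_cut e D1 -> is_cut e D2 ->
    exists2 k, (k <= #|T| - 1)%N & skel_walk e R k D1 D2.
  move=> D1 D2 [S1 ->] [S2 ->].
  case: (pickP (fun _ : T => true)) => [r _|h].
    have h1 : (0 < #|Areach e (sd S1 S2) r|)%N by apply/card_gt0P; exists r; rewrite inE connect0.
    have [k km w] := walk_from esym eirr R cG (m := #|T| - 1) S1 (leq_sub2l #|T| h1).
    by exists k => //; rewrite sdK in w.
  have -> : S1 = S2 by apply/setP => x; have := h x.
  by exists 0%N => //; exact: walk0.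
have LB : exists D1 D2, [/\ is_cut e D1, is_cut e D2 &
    forall k, (k < #|T| %/ 3)%N -> ~ skel_walk e R k D1 D2].
  have [U hU] := maxcut esym eirr cG.
  exists (delta e set0), (delta e U); split; try by eexists.
  move=> k kn w.
  have := walk_bound esym eirr aT w; rewrite (delta0 eirr) sdC sd0 => hw.
  exact: (arith3 hU hw kn (leq_trunc_div _ _)).
have HN : forall j, (exists D1 D2, [/\ is_cut e D1, is_cut e D2 &
    forall k, (k < j)%N -> ~ skel_walk e R k D1 D2]) -> (j <= #|T| - 1)%N.
  move=> j [D1 [D2 [c1 c2 H]]]; have [k kn w] := UB D1 D2 c1 c2.
  rewrite leqNgt; apply/negP => jn; apply: (H k) => //; exact: leq_ltn_trans kn jn.
have [d [Qd nQd ld]] := find_max LB HN.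
exists d; split; last by rewrite ld /=; exact: HN.
split; last exact: Qd.
move=> D1 D2 c1 c2; apply: NNPP => nw; apply: nQd.
exists D1, D2; split => // k kd w; apply: nw; by exists k.
Qed.
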